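(* Let $(X,\phi)$ be an acyclic convex geometry, let $A\subseteq X$ be a critical minimal generator of $b\in X$, and let $\Sigma$ be any unit implicational base of $(X,\phi)$. Then there exists an implication $C\to b\in\Sigma$ with $A\subseteq C$.
   Context: All sets are finite. A closure operator $\phi$ on $X$ is extensive, monotone and idempotent on $2^X$; closed sets are those with $\phi(C)=C$. $(X,\phi)$ is standard if $\phi(\emptyset)=\emptyset$ and $\phi(\{x\})\setminus\{x\}$ is closed for each $x$. A unit implicational base $\Sigma$ (set of implications $A\to b$, $A\subseteq X$, $b\in X$) is an implicational base of $(X,\phi)$ if its closed sets (sets $S$ such that for each $A\to b\in\Sigma$, $A\not\subseteq S$ or $b\in S$) are exactly the closed sets of $\phi$. $\Sigma$ is acyclic if the directed graph on $X$ with arcs $x\to y$ whenever some $A\to y\in\Sigma$ has $x\in A$ has no directed cycle; $\Sigma$ is irredundant if removing any implication changes the closed sets. An acyclic convex geometry is a standard closure space admitting an acyclic implicational base. $A$ is a minimal generator of $b$ if $b\in\phi(A)$ and $b\notin\phi(A\setminus\{x\})$ for all $x\in A$. An acyclic convex geometry admits a unique irredundant implicational base all of whose implications $A\to b$ have $A$ a minimal generator of $b$ (the critical base); a minimal generator $A$ of $b$ is critical if $A\to b$ is in the critical base. *)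

(* Defs.v *)
From mathcomp Require Import all_boot.
Set Implicit Arguments. Unset Strict Implicit. Unset Printing Implicit Defensive.

Section ClosureDefs.
Variable X : finType.

Definition closure_operator (phi : {set X} -> {set X}) : Prop :=
  [/\ (forall S : {set X}, S \subset phi S),
      (forall S T : {set X}, S \subset T -> phi S \subset phi T) &
      (forall S : {set X}, phi (phi S) = phi S)].

Definition phi_closed (phi : {set X} -> {set X}) (C : {set X}) : Prop := phi C = C.

Definition standard (phi : {set X} -> {set X}) : Prop :=
  phi set0 = set0 /\ forall x : X, phi_closed phi (phi [set x] :\ x).

Definition implication := ({set X} * X)%type.

Definition sigma_closed (Sigma : {set implication}) (S : {set X}) : Prop :=
  forall (A : {set X}) (b : X), (A, b) \in Sigma -> ~~ (A \subset S) \/ b \in S.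

Definition implicational_base (phi : {set X} -> {set X}) (Sigma : {set implication}) : Prop :=
  forall S : {set X}, sigma_closed Sigma S <-> phi_closed phi S.

Definition dep_graph (Sigma : {set implication}) : rel X :=
  fun x y => [exists A : {set X}, ((A, y) \in Sigma) && (x \in A)].

Definition acyclic (Sigma : {set implication}) : Prop :=
  forall c : seq X, c != [::] -> ~~ cycle (dep_graph Sigma) c.

Definition irredundant (Sigma : {set implication}) : Prop :=
  forall i : implication, i \in Sigma ->
    ~ (forall S : {set X}, sigma_closed (Sigma :\ i) S <-> sigma_closed Sigma S).

Definition acyclic_convex_geometry (phi : {set X} -> {set X}) : Prop :=
  [/\ closure_operator phi, standard phi &
      exists Sigma : {set implication}, implicational_base phi Sigma /\ acyclic Sigma].

Definition minimal_generator (phi : {set X} -> {set X}) (A : {set X}) (b : X) : Prop :=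
  b \in phi A /\ forall x : X, x \in A -> b \notin phi (A :\ x).

(* the critical base: the (unique, for acyclic convex geometries) irredundant
   implicational base all of whose premises are minimal generators *)
Definition critical_base (phi : {set X} -> {set X}) (Sigma : {set implication}) : Prop :=
  [/\ implicational_base phi Sigma, irredundant Sigma &
      forall (A : {set X}) (b : X), (A, b) \in Sigma -> minimal_generator phi A b].

Definition critical_generator (phi : {set X} -> {set X}) (A : {set X}) (b : X) : Prop :=
  minimal_generator phi A b /\
  forall Sigma : {set implication}, critical_base phi Sigma -> (A, b) \in Sigma.

End ClosureDefs.

(* Main.v *)
Require Import Defs.
From mathcomp Require Import all_boot.

Section Aux.
Variable X : finType.

Definition scb (S : {set implication X}) (T : {set X}) : bool :=
  [forall A : {set X}, forall b : X, ((A, b) \in S) ==> (~~ (A \subset T) || (b \in T))].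

Lemma scbP S T : reflect (sigma_closed S T) (scb S T).
Proof.
apply: (iffP forallP) => H.
  move=> A b Hab; have /forallP/(_ b)/implyP/(_ Hab)/orP := H A; by [].
move=> A; apply/forallP => b; apply/implyP => Hab; apply/orP; exact: H.
Qed.

Definition baseb (phi : {set X} -> {set X}) (S : {set implication X}) : bool :=
  [forall T : {set X}, scb S T == (phi T == T)].

Lemma basebP phi S : reflect (implicational_base phi S) (baseb phi S).
Proof.
apply: (iffP forallP) => H.
  move=> T; have /eqP H0 := H T; rewrite /phi_closed; split.
    by move/scbP; rewrite H0 => /eqP.
  by move=> E; apply/scbP; rewrite H0 E eqxx.
move=> T; apply/eqP; apply/idP/idP.
  by move/scbP/(H T) => ->.
by move/eqP/(H T)/scbP.
Qed.

End Aux.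
Arguments baseb {X}. Arguments scb {X}. Arguments basebP {X}. Arguments scbP {X}.

Theorem proposition4 (X : finType) (phi : {set X} -> {set X})
  (A : {set X}) (b : X) (Sigma : {set implication X}) :
  acyclic_convex_geometry phi ->
  critical_generator phi A b ->
  implicational_base phi Sigma ->
  exists C : {set X}, (C, b) \in Sigma /\ A \subset C.
Proof.
case=> [[ext mono idem] _ _] [_ crit] base.
pose good (i : implication X) (A' : {set X}) :=
  (A' \subset i.1) && (i.2 \in phi A') && [forall x in A', i.2 \notin phi (A' :\ x)].
pose red (i : implication X) := if [pick A' | good i A'] is Some A' then A' else i.1.
have redP : forall i, i \in Sigma -> good i (red i).
  move=> [C c] Hi.
  have cC : c \in phi C.
    have : sigma_closed Sigma (phi C) by apply/base; rewrite /phi_closed idem.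
    by case/(_ C c Hi) => //; rewrite ext.
  have h0 : (C \subset C) && (c \in phi C) by rewrite subxx cC.
  have [A0 mA0 _] := @minset_exists _ (fun A' : {set X} => (A' \subset C) && (c \in phi A')) C h0.
  have Hg : good (C, c) A0.
    have /andP[s1 s2] := minsetp mA0.
    rewrite /good /= s1 s2 /=; apply/forall_inP => x xA; apply/negP => cx.
    have E := minsetinf mA0 (B := A0 :\ x).
    have : A0 :\ x = A0.
      apply: E; last by apply: subD1set.
      by rewrite cx andbT; apply: subset_trans s1; apply: subD1set.
    by move/setP/(_ x); rewrite !inE eqxx xA.
  rewrite /red; case: pickP => [A' //|/(_ A0)]; by rewrite Hg.
pose Sig1 := [set (red i, i.2) | i in Sigma].
have base1 : implicational_base phi Sig1.
  move=> T; split.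
    move=> H; apply/base => C c Hi.
    case: (boolP (C \subset T)) => CT; last by left.
    have := H (red (C, c)) c (imset_f (fun i => (red i, i.2)) Hi).
    have /andP[/andP[s1 _] _] := redP _ Hi.
    case=> [nsub|->]; last by right.
    by rewrite (subset_trans s1 CT) in nsub.
  move=> HT A' c /imsetP [[C c'] Hi [-> ->]] /=.
  have /andP[/andP[_ s2] _] := redP _ Hi.
  case: (boolP (red (C, c') \subset T)) => sub; [right|by left].
  by rewrite -HT; apply: (subsetP (mono _ _ sub)).
have h1 : (Sig1 \subset Sig1) && baseb phi Sig1 by rewrite subxx; apply/basebP.
have [Sig2 mS2 _] := @minset_exists _ (fun S : {set implication X} => (S \subset Sig1) && baseb phi S) Sig1 h1.
have /andP[sub2 /basebP base2] := minsetp mS2.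
have crit2 : critical_base phi Sig2.
  split => //.
    move=> i Hi Heq.
    have E := minsetinf mS2 (B := Sig2 :\ i).
    have : Sig2 :\ i = Sig2.
      apply: E; last by apply: subD1set.
      apply/andP; split; first by apply: subset_trans sub2; apply: subD1set.
      by apply/basebP => T; split => [/Heq/base2|/base2/Heq].
    by move/setP/(_ i); rewrite !inE eqxx Hi.
  move=> A' c Hi.
  have /imsetP [[C c'] HiS [-> ->]] := subsetP sub2 _ Hi.
  have /andP[/andP[_ s2] /forall_inP s3] := redP _ HiS.
  by split => // x /s3.
have /imsetP [[C c'] HiS [EA Eb]] := subsetP sub2 _ (crit _ crit2).
exists C; rewrite Eb; split => //.
have /andP[/andP[s1 _] _] := redP _ HiS.
by rewrite EA.
Qed.
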